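(* Let $X$ and $Y$ be complete metric spaces, $k\ge2$, with nonexpansive $k$-means $\mu$ on $X$ and $\nu$ on $Y$ that are coordinatewise $\rho$-contractive and coordinatewise $\rho'$-contractive respectively ($0<\rho,\rho'<1$), and let $\mu_n,\nu_n$ ($n\ge k$) be their iterated $\beta$-extensions. Let $\le$ be a closed partial order on $Y$ for which $\nu$ is monotone. If $g:X\to Y$ is continuous and $g\circ\mu\le\nu\circ g_k$ (resp. $g\circ\mu\ge\nu\circ g_k$) pointwise on $X^k$, then for every $n\ge k$, $g\circ\mu_n\le\nu_n\circ g_n$ (resp. $g\circ\mu_n\ge\nu_n\circ g_n$) pointwise on $X^n$.
   Context: A $k$-mean is a map $\mu:X^k\to X$ with $\mu(x,\ldots,x)=x$. Nonexpansive: $d(\mu(\mathbf{x}),\mu(\mathbf{y}))\le\max_j d(x_j,y_j)$; coordinatewise $\rho$-contractive: $d(\mu(\mathbf{x}),\mu(\mathbf{y}))\le\rho\,d(x_j,y_j)$ when $\mathbf{x},\mathbf{y}$ differ only in coordinate $j$. $g_n(x_1,\ldots,x_n)=(g(x_1),\ldots,g(x_n))$. A $k$-mean $\nu$ is monotone if $y_i\le y_i'$ for all $i$ implies $\nu(\mathbf{y})\le\nu(\mathbf{y}')$. A partial order is closed if its graph is closed in $Y\times Y$. Barycentric operator of a $k$-mean: $\beta(\mathbf{x})_j=\mu(x_1,\ldots,\widehat{x_j},\ldots,x_{k+1})$; $\mu_k=\mu$ and $\mu_{n+1}$ is the unique continuous $(n+1)$-mean with $\beta_{\mu_n}^r(\mathbf{x})\to(\mu_{n+1}(\mathbf{x}),\ldots,\mu_{n+1}(\mathbf{x}))$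 for all $\mathbf{x}$; similarly for $\nu_n$. *)

(* Defs.v *)
From Stdlib Require Import Reals.
From mathcomp Require Import all_boot.
Set Implicit Arguments. Unset Strict Implicit. Unset Printing Implicit Defensive.
Local Open Scope R_scope.

Definition is_metric (X : Type) (d : X -> X -> R) : Prop :=
  (forall x y, 0 <= d x y) /\ (forall x y, d x y = 0 <-> x = y) /\
  (forall x y, d x y = d y x) /\ (forall x y z, d x z <= d x y + d y z).

Definition cauchy_seq (X : Type) (d : X -> X -> R) (u : nat -> X) : Prop :=
  forall eps, 0 < eps -> exists N, forall m n, (N <= m)%nat -> (N <= n)%nat ->
    d (u m) (u n) < eps.

Definition converges (X : Type) (d : X -> X -> R) (u : nat -> X) (l : X) : Prop :=
  forall eps, 0 < eps -> exists N, forall n, (N <= n)%nat -> d (u n) l < eps.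

Definition complete (X : Type) (d : X -> X -> R) : Prop :=
  forall u, cauchy_seq d u -> exists l, converges d u l.

(* X^n is represented as 'I_n -> X, with the max metric. *)
Definition dmax (X : Type) (d : X -> X -> R) (n : nat) (x y : 'I_n -> X) : R :=
  \big[Rmax/0]_(i < n) d (x i) (y i).

Definition continuous_map (X Y : Type) (dX : X -> X -> R) (dY : Y -> Y -> R)
  (f : X -> Y) : Prop :=
  forall x eps, 0 < eps -> exists delta, 0 < delta /\
    forall y, dX x y < delta -> dY (f x) (f y) < eps.

Definition is_mean (X : Type) (k : nat) (mu : ('I_k -> X) -> X) : Prop :=
  forall x : X, mu (fun _ => x) = x.

Definition nonexpansive (X : Type) (d : X -> X -> R) (k : nat)
  (mu : ('I_k -> X) -> X) : Prop :=
  forall x y, d (mu x) (mu y) <= dmax d x y.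

Definition coord_contractive (X : Type) (d : X -> X -> R) (k : nat) (rho : R)
  (mu : ('I_k -> X) -> X) : Prop :=
  forall (x y : 'I_k -> X) (j : 'I_k), (forall i, i != j -> x i = y i) ->
    d (mu x) (mu y) <= rho * d (x j) (y j).

Definition gn (X Y : Type) (g : X -> Y) (n : nat) (x : 'I_n -> X) : 'I_n -> Y :=
  fun i => g (x i).

(* Barycentric operator of an n-mean: beta(x)_j = m(x_1,..,x_j omitted,..,x_{n+1}). *)
Definition beta (X : Type) (n : nat) (m : ('I_n -> X) -> X)
  (x : 'I_n.+1 -> X) : 'I_n.+1 -> X :=
  fun j => m (fun i : 'I_n => x (lift j i)).

Definition beta_extensions (X : Type) (d : X -> X -> R) (k : nat)
  (mu : ('I_k -> X) -> X) (muf : forall n, ('I_n -> X) -> X) : Prop :=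
  muf k = mu /\
  forall n, (k <= n)%nat ->
    is_mean (muf n.+1) /\
    continuous_map (@dmax X d n.+1) d (muf n.+1) /\
    forall x : 'I_n.+1 -> X,
      converges (@dmax X d n.+1) (fun r => iter r (beta (muf n)) x)
                (fun _ => muf n.+1 x).

Definition partial_order (Y : Type) (le : Y -> Y -> Prop) : Prop :=
  (forall y, le y y) /\ (forall y y', le y y' -> le y' y -> y = y') /\
  (forall y y' y'', le y y' -> le y' y'' -> le y y'').

(* The graph {(y,y') | y <= y'} is closed in Y x Y (product metric = max). *)
Definition closed_order (Y : Type) (d : Y -> Y -> R) (le : Y -> Y -> Prop) : Prop :=
  forall y y', ~ le y y' -> exists eps, 0 < eps /\
    forall z z', d z y < eps -> d z' y' < eps -> ~ le z z'.

Definition monotone_mean (Y : Type) (le : Y -> Y -> Prop) (k : nat)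
  (nu : ('I_k -> Y) -> Y) : Prop :=
  forall y y' : 'I_k -> Y, (forall i, le (y i) (y' i)) -> le (nu y) (nu y').

(* Main.v *)
Require Import Defs.
From Stdlib Require Import Reals Classical.
From mathcomp Require Import all_boot.
Local Open Scope R_scope.

Lemma bigmax_seq (I : eqType) (F : I -> R) (s : seq I) i :
  i \in s -> F i <= \big[Rmax/0]_(j <- s) F j.
Proof.
elim: s => [|a s IH] //=; rewrite inE big_cons => /orP [/eqP -> | H].
- apply Rmax_l.
- eapply Rle_trans; [apply IH, H| apply Rmax_r].
Qed.

Lemma dmax_ge (T : Type) (d : T -> T -> R) n (x y : 'I_n -> T) i :
  d (x i) (y i) <= dmax d x y.
Proof.
rewrite /dmax; apply: (@bigmax_seq _ (fun j => d (x j) (y j))).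
exact: mem_index_enum.
Qed.

Lemma conv_coord {T : Type} {d : T -> T -> R} {n} {u : nat -> 'I_n -> T} {l} i :
  converges (@dmax T d n) u (fun _ => l) -> converges d (fun r => u r i) l.
Proof.
move=> H eps He; case: (H eps He) => N HN; exists N => m Hm.
eapply Rle_lt_trans; [apply (@dmax_ge _ d _ (u m) (fun _ => l) i)|exact: HN].
Qed.

Lemma cont_conv {X Y : Type} {dX : X -> X -> R} {dY : Y -> Y -> R} {g u l} :
  is_metric dX -> is_metric dY -> continuous_map dX dY g ->
  converges dX u l -> converges dY (fun r => g (u r)) (g l).
Proof.
move=> [_ [_ [sX _]]] [_ [_ [sY _]]] Hg Hu eps He.
case: (Hg l eps He) => del [Hd Hdel].
case: (Hu del Hd) => N HN; exists N => m Hm.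
rewrite sY; apply Hdel; rewrite sX; exact: HN.
Qed.

Lemma closed_lim {Y : Type} {dY : Y -> Y -> R} {le : Y -> Y -> Prop} {a b A B} :
  closed_order dY le -> converges dY a A -> converges dY b B ->
  (forall r, le (a r) (b r)) -> le A B.
Proof.
move=> Hc Ha Hb Hab; apply NNPP => H.
case: (Hc _ _ H) => eps [He Hz].
case: (Ha eps He) => N1 H1; case: (Hb eps He) => N2 H2.
apply: (Hz (a (maxn N1 N2)) (b (maxn N1 N2))); last exact: Hab.
- apply H1; exact: leq_maxl.
- apply H2; exact: leq_maxr.
Qed.

Lemma main_dir
  (X Y : Type) (dX : X -> X -> R) (dY : Y -> Y -> R)
  (k : nat) (mu : ('I_k -> X) -> X) (nu : ('I_k -> Y) -> Y)
  (muf : forall n, ('I_n -> X) -> X) (nuf : forall n, ('I_n -> Y) -> Y)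
  (le : Y -> Y -> Prop) (g : X -> Y) :
  is_metric dX -> is_metric dY ->
  beta_extensions dX mu muf -> beta_extensions dY nu nuf ->
  partial_order le -> closed_order dY le -> monotone_mean le nu ->
  continuous_map dX dY g ->
  (forall x : 'I_k -> X, le (g (mu x)) (nu (gn g x))) ->
  forall m, monotone_mean le (nuf (k + m)%nat) /\
    forall x : 'I_(k + m) -> X, le (g (muf (k + m)%nat x)) (nuf (k + m)%nat (gn g x)).
Proof.
move=> mX mY [Hmk HbX] [Hnk HbY] [Hrefl [_ Htr]] Hc Hmon Hg H0.
elim=> [|m [IHm IHx]].
  rewrite addn0 Hmk Hnk; split; [exact: Hmon| exact: H0].
rewrite addnS.
have kn : (k <= k + m)%nat by exact: leq_addr.
case: (HbX _ kn) => _ [_ CX]; case: (HbY _ kn) => _ [_ CY].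
set n := (k + m)%nat in IHm IHx CX CY *.
split.
- move=> y y' Hyy.
  have Hit : forall r i, le (iter r (beta (nuf n)) y i) (iter r (beta (nuf n)) y' i).
    elim=> [|r IH] i /=; first exact: Hyy.
    rewrite /beta; apply: IHm => j; exact: IH.
  apply: (closed_lim Hc (conv_coord ord0 (CY y)) (conv_coord ord0 (CY y'))).
  move=> r; exact: Hit.
- move=> x.
  have Hit : forall r i, le (g (iter r (beta (muf n)) x i))
                            (iter r (beta (nuf n)) (gn g x) i).
    elim=> [|r IH] i /=; first exact: Hrefl.
    rewrite /beta; eapply Htr; first exact: IHx.
    apply: IHm => j; exact: IH.
  apply: (closed_lim Hc (cont_conv mX mY Hg (conv_coord ord0 (CX x)))
                         (conv_coord ord0 (CY (gn g x)))).
  move=> r; exact: Hit.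
Qed.

Theorem theorem9p3
  (X Y : Type) (dX : X -> X -> R) (dY : Y -> Y -> R)
  (k : nat) (rho rho' : R)
  (mu : ('I_k -> X) -> X) (nu : ('I_k -> Y) -> Y)
  (muf : forall n, ('I_n -> X) -> X) (nuf : forall n, ('I_n -> Y) -> Y)
  (le : Y -> Y -> Prop) (g : X -> Y) :
  is_metric dX -> complete dX -> is_metric dY -> complete dY ->
  (2 <= k)%nat ->
  is_mean mu -> nonexpansive dX mu -> 0 < rho < 1 -> coord_contractive dX rho mu ->
  is_mean nu -> nonexpansive dY nu -> 0 < rho' < 1 -> coord_contractive dY rho' nu ->
  beta_extensions dX mu muf -> beta_extensions dY nu nuf ->
  partial_order le -> closed_order dY le -> monotone_mean le nu ->
  continuous_map dX dY g ->
  ((forall x : 'I_k -> X, le (g (mu x)) (nu (gn g x))) ->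
     forall n, (k <= n)%nat -> forall x : 'I_n -> X, le (g (muf n x)) (nuf n (gn g x)))
  /\
  ((forall x : 'I_k -> X, le (nu (gn g x)) (g (mu x))) ->
     forall n, (k <= n)%nat -> forall x : 'I_n -> X, le (nuf n (gn g x)) (g (muf n x))).
Proof.
move=> mX _ mY _ _ _ _ _ _ _ _ _ _ BX BY Hpo Hc Hmon Hg.
split=> H0 n Hn; have [m ->] : exists m, n = (k + m)%nat
  by exists (n - k)%nat; rewrite subnKC.
- by case: (@main_dir _ _ _ _ _ _ _ _ _ _ _ mX mY BX BY Hpo Hc Hmon Hg H0 m).
- pose le' := fun y y' => le y' y.
  have Hpo' : partial_order le'.
    case: Hpo => [r [a t]]; split; first exact: r.
    split; first by move=> y y' h1 h2; apply: a.
    by move=> y y' y'' h1 h2; apply: (t _ _ _ h2 h1).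
  have Hc' : closed_order dY le'.
    move=> y y' H; case: (Hc _ _ H) => eps [He Hz]; exists eps; split => //.
    by move=> z z' h1 h2; apply: Hz.
  have Hmon' : monotone_mean le' nu by move=> y y' h; apply: Hmon.
  by case: (@main_dir _ _ _ _ _ _ _ _ _ _ _ mX mY BX BY Hpo' Hc' Hmon' Hg H0 m).
Qed.
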